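(* Let $q$ be a prime power, let $0\le t\le q^2-2$ with $q$-adic expression $t=b_0+b_1q$ ($0\le b_0,b_1\le q-1$), let $\Delta=\{0,1,\ldots,t\}$ and let $E=D_\Delta\subseteq\mathbb{F}_{q^2}^{q^2}$ be the corresponding (extended) Reed–Solomon code obtained by evaluating at all elements of $\mathbb{F}_{q^2}$. Then the EAQECC associated with $E$ (Hermitian construction) has parameters $$[[q^2,\,(q-b_1)^2-2b_0-2,\,t+2;\,b_1^2]]_q$$ when $b_0+b_1<q-1$, and parameters $$[[q^2,\,(q-b_1-1)^2,\,t+2;\,b_1^2+2(b_0+b_1-q)+3]]_q$$ otherwise (i.e. when $b_0+b_1\ge q-1$).
   Context: Let $P_1,\dots,P_{q^2}$ be all the elements of $\mathbb{F}_{q^2}$ (the roots of $X^{q^2}-X$). For $\Delta\subseteq\{0,1,\ldots,q^2-2\}$, $D_\Delta$ is the $\mathbb{F}_{q^2}$-linear code spanned by the vectors $(P_1^i,\dots,P_{q^2}^i)$, $i\in\Delta$ (with $0^0=1$). The Hermitian inner product on $\mathbb{F}_{q^2}^N$ is $x\cdot y=\sum_{i} x_iy_i^q$. For a linear code $E\subseteq\mathbb{F}_{q^2}^N$ of dimension $k$ whose Hermitian dual $C$ has minimum distance $d$, the associated EAQECC is an entanglement-assisted quantum error-correcting code over $\mathbb{F}_q$ with parameters $[[N,\,N-2k+c,\,d;\,c]]_q$, where $c=\dim E-\dim(E\cap C)$. *)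

(* Defs.v *)
From HB Require Import structures.
From mathcomp Require Import all_boot all_order all_algebra all_field.
Set Implicit Arguments. Unset Strict Implicit. Unset Printing Implicit Defensive.
Import Order.TTheory GRing.Theory Num.Theory.
Local Open Scope ring_scope.

(* Codes of length N = #|F| over F = F_{q^2}; coordinate j corresponds to the
   evaluation point P_j := enum_val j (an enumeration of all elements of F). *)
Definition evalpt (F : finFieldType) (j : 'I_#|F|) : F := enum_val j.

(* (P_1^i, ..., P_N^i), with 0^0 = 1 (x ^+ 0 = 1). *)
Definition evalvec (F : finFieldType) (i : nat) : 'rV[F]_#|F| :=
  \row_(j < #|F|) (evalpt j) ^+ i.

Definition Dcode (F : finFieldType) (Delta : seq nat) : {vspace 'rV[F]_#|F|} :=
  <<map (@evalvec F) Delta>>%VS.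

Definition hdot (F : finFieldType) (q : nat) (x y : 'rV[F]_#|F|) : F :=
  \sum_(j < #|F|) x 0 j * (y 0 j) ^+ q.

Definition hdual_set (F : finFieldType) (q : nat) (E : {vspace 'rV[F]_#|F|})
  : seq 'rV[F]_#|F| :=
  [seq y <- enum [set: 'rV[F]_#|F|] |
     [forall x : 'rV[F]_#|F|, (x \in E) ==> (hdot q x y == 0)]].

(* Hermitian dual: the code (span) of all y with x . y = 0 for every x in E.
   (This set is already a subspace, so the span is just the set itself.) *)
Definition hdual (F : finFieldType) (q : nat) (E : {vspace 'rV[F]_#|F|})
  : {vspace 'rV[F]_#|F|} :=
  <<hdual_set q E>>%VS.

Definition wt (F : finFieldType) (y : 'rV[F]_#|F|) : nat :=
  #|[set j | y 0 j != 0]|.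

Definition min_dist (F : finFieldType) (C : {vspace 'rV[F]_#|F|}) (d : nat) : Prop :=
  (exists2 y, y \in C & (y != 0) && (wt y == d)) /\
  (forall y, y \in C -> y != 0 -> (d <= wt y)%N).

(* Main.v *)
Require Import Defs.
From HB Require Import structures.
From mathcomp Require Import all_boot all_order all_algebra all_field.
From mathcomp Require Import zify ring.
Import Order.TTheory GRing.Theory Num.Theory.
Set Implicit Arguments. Unset Strict Implicit. Unset Printing Implicit Defensive.

Definition sigq (q i : nat) := (q.-1 - i %/ q) + (q.-1 - i %% q) * q.

Section Arith.
Variable q : nat.
Hypothesis q2 : 1 < q.

Lemma digit_div a b : a < q -> (a + b * q) %/ q = b.
Proof. by move=> aq; rewrite divnDMl ?divn_small //; lia. Qed.

Lemma digit_mod a b : a < q -> (a + b * q) %% q = a.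
Proof. by move=> aq; rewrite addnC modnMDl modn_small. Qed.

Lemma digits i : i = i %% q + i %/ q * q.
Proof. by rewrite addnC -divn_eq. Qed.

Lemma digit_lt i : i < q * q -> i %/ q < q.
Proof. by move=> h; rewrite ltn_divLR //; lia. Qed.

Lemma mod_lt i : i %% q < q.
Proof. by rewrite ltn_mod; lia. Qed.

Lemma sigE a b : a < q -> b < q -> sigq q (a + b * q) = (q.-1 - b) + (q.-1 - a) * q.
Proof. by move=> aq bq; rewrite /sigq digit_div // digit_mod. Qed.

Lemma sig_lt i : i < q * q -> sigq q i < q * q.
Proof.
move=> h; rewrite /sigq; have := digit_lt h; have := mod_lt i.
set a := i %% q; set b := i %/ q => ha hb; (timeout 10 nia).
Qed.

Lemma sigK i : i < q * q -> sigq q (sigq q i) = i.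
Proof.
move=> h; have ha := mod_lt i; have hb := digit_lt h.
have ei := digits i; move: ha hb ei; set a := i %% q; set b := i %/ q => ha hb ei.
rewrite ei sigE // sigE; [|lia|lia].
have -> : q.-1 - (q.-1 - a) = a by lia.
have -> : q.-1 - (q.-1 - b) = b by lia.
by [].
Qed.

Lemma f1 : q.-1 * q + q = q * q.
Proof. by case: (q) q2 => [|q'] //= _; rewrite addnC -mulSn. Qed.

Lemma f3 : ((q.-1).*2).-1 * q + q = (q.-1 * q).*2.
Proof.
case: (q) q2 => [|q'] //= hq; rewrite addnC -mulSn prednK; last by lia.
by rewrite -!mul2n mulnA.
Qed.

Lemma key_div i i' : i <= q * q - 2 -> i' <= q * q - 2 ->
  ((0 < i' + i * q) && (q * q - 1 %| i' + i * q)) = ((0 < i) && (i' == sigq q i)).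
Proof.
move=> hi hi'.
have hiq : i < q * q by lia.
have hiq' : i' < q * q by lia.
have hb := digit_lt hiq; have ha := mod_lt i.
have hb' := digit_lt hiq'; have ha' := mod_lt i'.
have ei := digits i; have ei' := digits i'.
move: ei ei' ha hb ha' hb'.
set a := i %% q; set b := i %/ q; set a' := i' %% q; set b' := i' %/ q.
move=> ei ei' ha hb ha' hb'.
rewrite ei ei' in hi hi' *.
rewrite sigE //.
have F1 := f1; have F3 := f3.
have q4 : 4 <= q * q by apply: (@leq_mul 2 2).
set n1 := q * q - 1.
have hY : a' + b' * q + (a + b * q) * q = (a' + b + (a + b') * q) + b * n1.
  rewrite /n1 mulnDl -mulnA mulnBr muln1.
  have : b <= b * (q * q) by rewrite leq_pmulr //; lia.
  lia.
have hvq : (a + b') * q <= (q.-1 * q).*2.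
  rewrite -mul2n mulnA mul2n; apply: leq_mul => //; lia.
apply/idP/idP.
  rewrite hY dvdn_addl; last exact: dvdn_mull.
  case/andP => hpos /dvdnP [k hk].
  have k2 : k <= 2.
    case: (leqP k 2) => // hk3; exfalso.
    have : 3 * n1 <= k * n1 by apply: leq_mul.
    rewrite /n1; lia.
  have : k = 0 \/ k = 1 \/ k = 2 by lia.
  case=> [ek|[ek|ek]]; rewrite ek in hk.
  - exfalso; have b0 : b = 0 by lia.
    by rewrite b0 mul0n addn0 in hpos; lia.
  - have hv : a + b' = q.-1.
      case: (ltngtP (a + b') q.-1) => hv //; exfalso.
      + have : (a + b') * q <= (q.-1).-1 * q by apply: leq_mul; lia.
        have e1 : (q.-1).-1 * q + 2 * q = q * q.
          by case: (q) q2 => [|[|q']] //= _; rewrite -mulnDl; congr (_ * _); lia.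
        rewrite /n1 in hk; lia.
      + have : q * q <= (a + b') * q by apply: leq_mul; lia.
        rewrite /n1 in hk; lia.
    have hu : a' + b = q.-1.
      rewrite /n1 hv in hk; lia.
    apply/andP; split.
      case: (posnP (a + b * q)) => // h0; exfalso.
      have a0 : a = 0 by lia.
      have b0 : b = 0.
        by move: h0; rewrite a0 add0n => /eqP; rewrite muln_eq0; case/orP => /eqP //; lia.
      rewrite a0 b0 in hv hu.
      have ea' : a' = q.-1 by lia.
      have eb' : b' = q.-1 by lia.
      rewrite ea' eb' in hi'; lia.
    apply/eqP; congr (_ + _ * _); lia.
  - exfalso.
    have hv : a + b' = (q.-1).*2.
      case: (ltngtP (a + b') (q.-1).*2) => hv //; last lia.
      have : (a + b') * q <= ((q.-1).*2).-1 * q by apply: leq_mul; lia.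
      rewrite /n1 in hk; lia.
    have hu : a' + b = (q.-1).*2.
      rewrite /n1 hv -mul2n -mulnA mul2n in hk; lia.
    have ea : a = q.-1 by lia.
    have eb : b = q.-1 by lia.
    rewrite ea eb in hi; lia.
case/andP => hpos /eqP e.
have eb' : b' = q.-1 - a.
  by have := congr1 (fun x => x %/ q) e; rewrite /= !digit_div //; lia.
have ea' : a' = q.-1 - b.
  by have := congr1 (fun x => x %% q) e; rewrite /= !digit_mod //; lia.
rewrite hY ea' eb'.
apply/andP; split.
  case: (posnP a) => a0.
    have : 0 < b by move: hpos; rewrite a0 add0n muln_gt0; case/andP.
    lia.
  have : 0 < (a + (q.-1 - a)) * q by rewrite muln_gt0; apply/andP; split; lia.
  lia.
rewrite dvdn_addl; last exact: dvdn_mull.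
apply/dvdnP; exists 1.
have -> : q.-1 - b + b = q.-1 by lia.
have -> : a + (q.-1 - a) = q.-1 by lia.
rewrite /n1; lia.
Qed.


Lemma lex_digits x0 x1 y0 y1 : x0 < q -> y0 < q ->
  (x0 + x1 * q <= y0 + y1 * q) = (x1 < y1) || ((x1 == y1) && (x0 <= y0)).
Proof.
move=> hx hy; case: (ltngtP x1 y1) => h /=.
- have : (x1.+1) * q <= y1 * q by apply: leq_mul.
  rewrite mulSn; lia.
- have : (y1.+1) * q <= x1 * q by apply: leq_mul.
  rewrite mulSn; lia.
- by rewrite h leq_add2r.
Qed.

Lemma sum_range m lo hi : hi <= m ->
  \sum_(0 <= x < m) ((lo <= x) && (x < hi) : nat) = hi - lo.
Proof.
elim: m hi => [|n IH] hi hhi.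
  by rewrite big_geq //; lia.
rewrite big_nat_recr //=.
case: (ltngtP hi n.+1) => h.
- by rewrite andbF addn0 IH //; lia.
- lia.
- rewrite andbT h.
  rewrite (eq_big_nat _ _ (F2 := fun x => ((lo <= x) && (x < n) : nat))); last first.
    by move=> x /andP[_ hx]; have -> : (x < n.+1) = (x < n) by lia.
  rewrite IH //; case: (leqP lo n) => /= h'; lia.
Qed.

Lemma sum_digits n (g : nat -> nat) :
  \sum_(0 <= i < n * q) g i = \sum_(0 <= b < n) \sum_(0 <= a < q) g (a + b * q).
Proof.
elim: n => [|n IH]; first by rewrite mul0n !big_geq.
rewrite big_nat_recr //= -IH mulSn addnC (big_cat_nat _ (n := n * q)) //=; last lia.
congr (_ + _).
rewrite -{1}[n * q]add0n big_addn addKn.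
by [].
Qed.

Section Count.
Variables b0 b1 t : nat.
Hypotheses (hb0 : b0 < q) (hb1 : b1 < q) (ht : t = b0 + b1 * q) (htq : t <= q * q - 2).

Definition bad i := (0 < i) && (sigq q i <= t).

Lemma count_bad : count bad (iota 0 t.+1) =
  b1 * b1 + 2 * (b0 + b1 + 1 - q) + (q.-1 <= b0 + b1).
Proof.
have F1 := f1.
set A := q.-1 - b1; set B := q.-1 - b0.
pose R lo hi x := ((lo <= x) && (x < hi) : nat).
pose g i := ((i <= t) && bad i : nat).
have e1a : count bad (iota 0 t.+1) = \sum_(0 <= i < t.+1) (bad i : nat).
  by rewrite -sum1_count big_mkcond.
have e1 : count bad (iota 0 t.+1) = \sum_(0 <= i < q * q) g i.
  rewrite e1a [RHS](big_cat_nat _ (n := t.+1)) //=; last lia.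
  rewrite [X in _ = _ + X]big1_seq ?addn0; last first.
    move=> i /andP[_]; rewrite mem_index_iota => hi.
    by rewrite /g; have -> : (i <= t) = false by lia.
  apply: eq_big_nat => i hi; rewrite /g.
  by have -> : (i <= t) = true by lia.
have e2 : forall a b, a < q -> b < q -> g (a + b * q) =
    R 0 b1 b * R A.+1 q a + R B b1 b * R A A.+1 a + R b1 b1.+1 b * R A.+1 b0.+1 a
    + (R b1 b1.+1 b * ((A <= b0) && (B <= b1))) * R A A.+1 a.
  move=> a b ha hb.
  rewrite /g /bad sigE // ht !lex_digits //; try lia.
  have -> : (q.-1 - a < b1) = (A < a) by apply/idP/idP; lia.
  have -> : (q.-1 - a == b1) = (a == A) by apply/idP/idP => /eqP; lia.
  have -> : (q.-1 - b <= b0) = (B <= b) by apply/idP/idP; lia.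
  rewrite /R; have hA : A < q by lia.
  have hB : B < q by lia.
  have F2 : ~~ ((A == 0) && (B == 0)).
    apply/negP => /andP[/eqP h1 /eqP h2].
    have eb1 : b1 = q.-1 by rewrite /A in h1; lia.
    have eb0 : b0 = q.-1 by rewrite /B in h2; lia.
    have ht2 := ht; have htq2 := htq; rewrite eb1 eb0 in ht2; rewrite ht2 in htq2; lia.
  have P0 : (0 < a + b * q) = (0 < a) || (0 < b).
    case: (posnP a) => [->|h]; last by have := leq_addr (b * q) a; lia.
    have q0 : 0 < q by lia.
    by rewrite add0n muln_gt0 q0 andbT.
  rewrite P0; move: F2; case: (ltngtP b b1) => hbb; case: (ltngtP a A) => haa; timeout 30 lia.
have e3 : \sum_(0 <= i < q * q) g i =
    \sum_(0 <= b < q) \sum_(0 <= a < q)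
    (R 0 b1 b * R A.+1 q a + R B b1 b * R A A.+1 a + R b1 b1.+1 b * R A.+1 b0.+1 a
    + (R b1 b1.+1 b * ((A <= b0) && (B <= b1))) * R A A.+1 a).
  rewrite sum_digits; apply: eq_big_nat => b hb; apply: eq_big_nat => a ha.
  by apply: e2; lia.
rewrite e1 e3.
under eq_bigr do rewrite !big_split /=.
rewrite !big_split /= -!big_distrlr -big_distrl /= /R !sum_range //; try lia.
have -> : q - A.+1 = b1 by rewrite /A; lia.
rewrite !subSnn !muln1 !mul1n.
have -> : ((A <= b0) && (B <= b1)) = (q.-1 <= b0 + b1).
  by rewrite /A /B; apply/idP/idP; [case/andP|]; lia.
rewrite /A /B; lia.
Qed.

End Count.

End Arith.

Local Open Scope ring_scope.

Section Basics.
Variable F : finFieldType.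
Local Notation N := #|F|.

Definition ev (f : {poly F}) : 'rV[F]_N := \row_j f.[evalpt j].

Lemma ev_sum n (c : 'I_n -> F) (e : 'I_n -> nat) :
  ev (\sum_(i < n) c i *: 'X^(e i)) = \sum_(i < n) c i *: evalvec F (e i).
Proof.
apply/rowP => j; rewrite !mxE horner_sum summxE; apply: eq_bigr => i _.
by rewrite !mxE hornerZ hornerXn.
Qed.

Lemma sum_evalpt (g : F -> F) : \sum_(j < N) g (evalpt j) = \sum_(a : F) g a.
Proof. by rewrite /evalpt (big_enum_val (A := F)). Qed.

Lemma ev_eq0 (f : {poly F}) : (size f <= N)%N -> ev f = 0 -> f = 0.
Proof.
move=> sf e0; apply: (roots_geq_poly_eq0 (rs := enum F)).
- apply/allP => a _; rewrite /root.
  have := congr1 (fun v : 'rV[F]_N => v 0 (enum_rank a)) e0.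
  by rewrite !mxE /evalpt enum_rankK => ->.
- exact: enum_uniq.
- by rewrite -cardE.
Qed.


Lemma size_sumXn n (c : 'I_n -> F) (e : 'I_n -> nat) M :
  (forall i, e i < M)%N -> (size (\sum_(i < n) c i *: 'X^(e i))%R <= M)%N.
Proof.
move=> he; apply: (leq_trans (size_sum _ _ _)); apply/bigmax_leqP => i _.
by apply: (leq_trans (size_scale_leq _ _)); rewrite size_polyXn.
Qed.

Lemma free_ev s : uniq s -> all (fun i => i < N)%N s -> free (map (evalvec F) s).
Proof.
move=> us /allP alls.
have := @freeP _ _ _ (in_tuple (map (evalvec F) s)); rewrite /= => H; apply/H => {H} k Hk i.
move: k Hk i; set n := size (map (evalvec F) s) => k Hk i.
have ns : n = size s by rewrite /n size_map.
pose f := \sum_(l < n) k l *: 'X^(nth 0%N s l).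
have evf : ev f = 0.
  rewrite ev_sum -[RHS]Hk; apply: eq_bigr => l _; congr (_ *: _).
  by rewrite /= (nth_map 0%N) // -ns.
have f0 : f = 0.
  apply: ev_eq0 evf; apply: size_sumXn => l; apply: alls; apply: mem_nth.
  by rewrite -ns.
have := congr1 (fun g : {poly F} => g`_(nth 0%N s i)) f0.
rewrite coef0 coef_sumMXn => <-.
rewrite (big_pred1 i) // => l /=; rewrite nth_uniq // -?ns //.
Qed.


Section Herm.
Variable q : nat.
Hypothesis hq : [pchar F].-nat q.

Lemma q_gt0 : (0 < q)%N. Proof. by case/andP: hq. Qed.

Lemma frob_sum I (r : seq I) (P : pred I) (g : I -> F) :
  (\sum_(i <- r | P i) g i) ^+ q = \sum_(i <- r | P i) (g i) ^+ q.
Proof.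
apply: (big_morph (fun x : F => x ^+ q)) => [x y|]; first exact: exprDn_pchar.
by rewrite expr0n; case: q q_gt0.
Qed.

Lemma hdot_sumr n (c : 'I_n -> F) (v : 'I_n -> 'rV[F]_N) x :
  hdot q x (\sum_(i < n) c i *: v i) = \sum_(i < n) (c i) ^+ q * hdot q x (v i).
Proof.
rewrite /hdot.
under eq_bigr => j _ do rewrite summxE frob_sum big_distrr.
rewrite exchange_big /=; apply: eq_bigr => i _; rewrite big_distrr /=.
by apply: eq_bigr => j _; rewrite mxE exprMn; ring.
Qed.

Lemma hdot_suml n (c : 'I_n -> F) (v : 'I_n -> 'rV[F]_N) y :
  hdot q (\sum_(i < n) c i *: v i) y = \sum_(i < n) c i * hdot q (v i) y.
Proof.
rewrite /hdot.
under eq_bigr => j _ do rewrite summxE big_distrl.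
rewrite exchange_big /=; apply: eq_bigr => i _; rewrite big_distrr /=.
by apply: eq_bigr => j _; rewrite mxE; ring.
Qed.

Lemma hdot_evalvec i' i :
  hdot q (evalvec F i') (evalvec F i) = \sum_(a : F) a ^+ (i' + i * q).
Proof.
rewrite /hdot -sum_evalpt; apply: eq_bigr => j _.
by rewrite !mxE -exprM -exprD.
Qed.

Lemma memC (E : {vspace 'rV[F]_N}) y :
  (y \in hdual q E) = [forall x, (x \in E) ==> (hdot q x y == 0)].
Proof.
apply/idP/idP => [yC | Hy]; last first.
  by apply: memv_span; rewrite /hdual_set mem_filter Hy mem_enum inE.
apply/forallP => x; apply/implyP => xE.
set L := hdual_set q E.
have := coord_span (X := in_tuple L) yC => ->.
rewrite hdot_sumr big1 // => i _.
have : (in_tuple L)`_i \in L by apply: mem_nth; rewrite /= ltn_ord.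
rewrite /L /hdual_set mem_filter => /andP[/forallP /(_ x) /implyP /(_ xE) /eqP -> _].
by rewrite mulr0.
Qed.

End Herm.


Section PowerSums.
Hypothesis hN : (N%:R = 0 :> F).

Lemma N_gt1 : (1 < N)%N. Proof. exact: finNzRing_gt1. Qed.

Lemma unit_pow_mod (a : F) k : a != 0 -> a ^+ k = a ^+ (k %% N.-1).
Proof.
move=> a0; rewrite expr_mod //.
have := expf_card a; rewrite -(ltn_predK N_gt1) exprS => /eqP.
by rewrite -{3}[a]mulr1 (inj_eq (mulfI a0)) => /eqP.
Qed.

Lemma psum_small k : (k < N.-1)%N -> \sum_(a : F) a ^+ k = 0.
Proof.
move=> hk; case: k hk => [|k] hk.
  by under eq_bigr do rewrite expr0; rewrite sumr_const.
have [c c0 ck] : exists2 c : F, c != 0 & c ^+ k.+1 != 1.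
  case: (boolP [exists (c : F | c != 0), c ^+ k.+1 != 1]).
    by move/exists_inP.
  move/exists_inPn => H; exfalso.
  have : ('X^(k.+2) - 'X : {poly F}) = 0.
    apply: (roots_geq_poly_eq0 (rs := enum F)); last 2 first.
    - exact: enum_uniq.
    - rewrite -cardE (leq_trans (size_polyD _ _)) // size_polyXn size_polyN size_polyX.
      rewrite geq_max; apply/andP; split; last by apply: (leq_trans _ N_gt1).
      by move: hk; rewrite -(ltn_predK N_gt1); lia.
    apply/allP => a _; rewrite /root !hornerE.
    have [->|a0] := eqVneq a 0; first by rewrite expr0n subr0.
    move: (H a a0) => /negPn /eqP.
    by move=> h; rewrite exprS h mulr1 subrr.
  move/(congr1 (fun p : {poly F} => p`_k.+2)).
  by rewrite coefB coefXn coefX eqxx /= subr0 coef0; apply/eqP; rewrite oner_eq0.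
set S := \sum_(a : F) a ^+ k.+1.
have : S = c ^+ k.+1 * S.
  rewrite {1}/S (reindex_inj (mulfI c0)) /= /S big_distrr /=.
  by apply: eq_bigr => a _; rewrite exprMn.
move/eqP; rewrite -subr_eq0 -{1}[S]mul1r -mulrBl mulf_eq0 subr_eq0 eq_sym.
by rewrite (negbTE ck) /= => /eqP.
Qed.

Lemma psum k : \sum_(a : F) a ^+ k =
  if (0 < k)%N && (N.-1 %| k)%N then -1 else 0.
Proof.
case: k => [|k]; first by apply: psum_small; have := N_gt1; lia.
rewrite (bigD1 0) //= expr0n /= add0r.
under eq_bigr => a a0 do rewrite (unit_pow_mod k.+1 a0).
case: ifP => /= hd.
  rewrite /dvdn in hd; rewrite (eqP hd).
  under eq_bigr do rewrite expr0.
  rewrite sumr_const cardC1.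
  move: hN; rewrite -(ltn_predK N_gt1) mulrSr => /eqP; rewrite addr_eq0 => /eqP.
  by move=> ->.
have hr : (0 < k.+1 %% N.-1 < N.-1)%N.
  rewrite ltn_mod; have := N_gt1; rewrite lt0n /dvdn in hd *.
  by rewrite hd; lia.
have := psum_small (k := k.+1 %% N.-1); case/andP: hr => hr1 hr2.
move/(_ hr2); rewrite (bigD1 0) //= expr0n.
have hr0 : (k.+1 %% N.-1 == 0)%N = false by lia.
by rewrite hr0 add0r.
Qed.

Lemma sum_horner_small (g : {poly F}) : (size g <= N.-1)%N -> \sum_(a : F) g.[a] = 0.
Proof.
move=> hg; under eq_bigr do rewrite horner_coef.
rewrite exchange_big /= big1 // => i _.
rewrite -big_distrr /= psum_small ?mulr0 //.
exact: leq_trans (ltn_ord i) hg.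
Qed.

End PowerSums.

Lemma ev_coef (f : {poly F}) n : (size f <= n)%N ->
  ev f = \sum_(i < n) f`_i *: evalvec F i.
Proof.
move=> hf; apply/rowP => j; rewrite !mxE (horner_coef_wide _ hf) summxE.
by apply: eq_bigr => i _; rewrite !mxE.
Qed.

Lemma evalpt_inj : injective (@evalpt F).
Proof. exact: enum_val_inj. Qed.


End Basics.

Lemma card_lt n k : (k <= n)%N -> #|[set j : 'I_n | (j < k)%N]| = k.
Proof.
move=> hk.
have -> : [set j : 'I_n | (j < k)%N] = [set widen_ord hk i | i : 'I_k].
  apply/setP => j; rewrite inE; apply/idP/imsetP => [hj|[i _ ->]].
    by exists (Ordinal hj) => //; apply: val_inj.
  by rewrite /= ltn_ord.
rewrite card_imset ?card_ord // => a b /(congr1 val) /= h; exact: val_inj.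
Qed.

Unset Implicit Arguments.

Theorem mainTheorem2 (F : finFieldType) (p m q : nat) (b0 b1 t : nat) :
  prime p -> (0 < m)%N -> q = (p ^ m)%N -> #|F| = (q ^ 2)%N ->
  (b0 < q)%N -> (b1 < q)%N -> t = (b0 + b1 * q)%N -> (t <= q ^ 2 - 2)%N ->
  let E := Dcode F (iota 0 t.+1) in
  let C := hdual q E in
  let k := \dim E in
  let c := (\dim E - \dim (E :&: C))%N in
  [/\ #|F| = (q ^ 2)%N,
      min_dist C t.+2,
      (#|F|%:Z - 2 * k%:Z + c%:Z =
         if (b0 + b1 < q - 1)%N
         then ((q - b1)%:Z) ^+ 2 - 2 * b0%:Z - 2
         else ((q - b1 - 1)%:Z) ^+ 2)%R
    & (c%:Z =
         if (b0 + b1 < q - 1)%N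
         then (b1%:Z) ^+ 2
         else (b1%:Z) ^+ 2 + 2 * (b0%:Z + b1%:Z - q%:Z) + 3)%R].
Proof.
intros Hp Hm Hq HF Hb0 Hb1 Ht Htq E C k c.
have pq : (p <= q)%N.
  by move: Hm Hq; case: (m) => // m' _ ->; rewrite expnS leq_pmulr // expn_gt0 prime_gt0.
have q2 : (1 < q)%N by apply: leq_trans (prime_gt1 Hp) pq.
have q0 : (0 < q)%N by lia.
have NQ : #|F| = (q * q)%N by rewrite HF mulnn.
have htq : (t <= q * q - 2)%N by rewrite mulnn.
have pch : p \in [pchar F].
  by apply: (card_finPcharP (n := (m * 2)%N)) => //; rewrite HF Hq -expnM.
have hq : [pchar F].-nat q by rewrite Hq pnatX (pnatE _ Hp) pch.
have hN : (#|F|%:R = 0 :> F).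
  apply/eqP; rewrite -(dvdn_pcharf pch) HF Hq -expnM.
  by apply: dvdn_exp; [lia | exact: dvdnn].
have N1 : (#|F|.-1 = q * q - 1)%N by rewrite NQ; lia.
have tN : (t < #|F|)%N by rewrite NQ; lia.
pose X := map (evalvec F) (iota 0 t.+1).
have EX : E = <<X>>%VS by [].
have freeX : free X.
  apply: free_ev; first exact: iota_uniq.
  by apply/allP => i; rewrite mem_iota; lia.
have dimE : \dim E = t.+1.
  by rewrite EX; move/eqP: freeX ->; rewrite size_map size_iota.
pose sv (c : nat -> F) := \sum_(i < t.+1) c i *: evalvec F i.
have memE : forall v, v \in E -> exists c, v = sv c.
  move=> v vE; have [kk hk _] := free_span freeX vE.
  exists (fun i => kk (evalvec F i)); rewrite hk /sv big_map.
  by rewrite -[iota 0 t.+1]/(index_iota 0 t.+1) big_mkord.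
have inE_sum : forall c, sv c \in E.
  move=> c0; apply: memv_suml => i _; apply: memvZ; apply: memv_span.
  by apply: map_f; rewrite mem_iota /= ltn_ord.
have evE : forall i, (i <= t)%N -> evalvec F i \in E.
  by move=> i hi; apply: memv_span; apply: map_f; rewrite mem_iota; lia.
have hee : forall i' i, (i <= t)%N -> (i' <= t)%N ->
    hdot q (evalvec F i') (evalvec F i) =
    if (0 < i)%N && (i' == sigq q i) then -1 else 0.
  move=> i' i hi hi'; rewrite hdot_evalvec (psum hN) N1 key_div //; lia.
have memCE : forall y, y \in C -> forall x, x \in E -> hdot q x y = 0.
  move=> y; rewrite memC // => /forallP H x xE.
  by move/implyP: (H x) => /(_ xE) /eqP.
have sigI : forall i j, (i <= t)%N -> (j <= t)%N -> (sigq q i == sigq q j) = (i == j).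
  move=> i j hi hj; apply/eqP/eqP => [h|->] //.
  by rewrite -(sigK q2 (i := i)) ?h ?sigK //; lia.
have hsv : forall i' c0, (i' <= t)%N ->
    hdot q (evalvec F i') (sv c0) =
    \sum_(i < t.+1) (c0 i) ^+ q * (if (0 < i)%N && (i' == sigq q i) then -1 else 0).
  move=> i' c0 hi'; rewrite /sv hdot_sumr //; apply: eq_bigr => i _.
  by rewrite hee //; rewrite -ltnS ltn_ord.
have badC : forall c0 i0, sv c0 \in C -> (i0 <= t)%N -> bad q t i0 -> c0 i0 = 0.
  move=> c0 i0 svC hi0 /andP[pos0 hs0].
  have := memCE _ svC _ (evE _ hs0); rewrite hsv //.
  rewrite (bigD1 (Ordinal (hi0 : (i0 < t.+1)%N))) //= pos0 eqxx big1 ?addr0.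
    by move/eqP; rewrite mulrN1 oppr_eq0 expf_eq0 q0 /= => /eqP.
  move=> i hi; rewrite sigI //; last by rewrite -ltnS ltn_ord.
  have -> : (i0 == i) = false.
    by apply/negbTE; move: hi; apply: contra => /eqP h; apply/eqP/val_inj.
  by rewrite andbF mulr0.
have goodC : forall i, (i <= t)%N -> ~~ bad q t i -> evalvec F i \in C.
  move=> i hi nb; rewrite memC //; apply/forallP => x; apply/implyP => /memE [c0 ->].
  rewrite /sv hdot_suml big1 //= => i' _.
  rewrite hee //; last by rewrite -ltnS ltn_ord.
  case: ifP => [/andP[pos /eqP e]|_]; last by rewrite mulr0.
  by exfalso; move: nb; rewrite /bad pos -e /= -ltnS ltn_ord.
pose G := map (evalvec F) (filter (predC (bad q t)) (iota 0 t.+1)).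
have ECG : (E :&: C)%VS = <<G>>%VS.
  apply/eqP; rewrite eqEsubv; apply/andP; split.
    apply/subvP => v; rewrite memv_cap => /andP[vE vC].
    have [c0 ev] := memE _ vE; rewrite ev in vC *.
    rewrite /sv (bigID (fun i : 'I_t.+1 => bad q t i)) /= big1 ?add0r; last first.
      by move=> i hb; rewrite (badC c0 i) ?scale0r // -ltnS ltn_ord.
    apply: memv_suml => i nb; apply: memvZ; apply: memv_span; apply: map_f.
    rewrite mem_filter mem_iota; apply/andP; split; [exact: nb | have := ltn_ord i; lia].
  apply/span_subvP => v /mapP [i]; rewrite mem_filter mem_iota /= => /andP[nb hi] ->.
  by rewrite memv_cap evE ?goodC //; lia.
have dimEC : \dim (E :&: C) = count (predC (bad q t)) (iota 0 t.+1).
  rewrite ECG; have : free G.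
    apply: free_ev; first by apply: filter_uniq; exact: iota_uniq.
    by apply/allP => i; rewrite mem_filter mem_iota; lia.
  by move/eqP => ->; rewrite size_map size_filter.
have cE : c = count (bad q t) (iota 0 t.+1).
  rewrite /c dimE dimEC; have := count_predC (bad q t) (iota 0 t.+1).
  rewrite size_iota; lia.
have kE : k = t.+1 by rewrite /k dimE.
have cnt := count_bad q2 Hb0 Hb1 Ht htq.
have cZ : c%:Z = if (b0 + b1 < q - 1)%N then (b1%:Z) ^+ 2
         else (b1%:Z) ^+ 2 + 2 * (b0%:Z + b1%:Z - q%:Z) + 3.
  rewrite cE cnt; case: ifP => h.
    have -> : (q.-1 <= b0 + b1)%N = false by lia.
    have -> : (b0 + b1 + 1 - q = 0)%N by lia.
    rewrite expr2 /=; lia.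
  have -> : (q.-1 <= b0 + b1)%N = true by lia.
  rewrite expr2 /=; lia.
split.
- exact: HF.
- split.
  + pose L := [set j : 'I_#|F| | (j < t.+2)%N].
    have t2N : (t.+2 <= #|F|)%N.
      have : (4 <= q * q)%N by apply: (@leq_mul 2 2).
      rewrite NQ; lia.
    have cardL : #|L| = t.+2 by apply: card_lt.
    pose T := ~: L.
    pose f := \prod_(a <- map (@evalpt F) (enum T)) ('X - a%:P).
    have sf : size f = (#|F| - t.+2).+1.
      rewrite size_prod_XsubC size_map -cardE; have := cardsC L.
      rewrite card_ord cardL /T; lia.
    pose y : 'rV[F]_#|F| := \row_j (f.[evalpt j]) ^+ q.
    have rootf : forall j, (f.[evalpt j] == 0) = (j \in T).
      by move=> j; rewrite -rootE root_prod_XsubC (mem_map (@evalpt_inj F)) mem_enum.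
    have wty : wt y = t.+2.
      rewrite /wt -cardL; apply: eq_card => j.
      by rewrite !inE mxE expf_eq0 q0 /= rootf !inE negbK.
    exists y.
      rewrite memC //; apply/forallP => x; apply/implyP => /memE [c0 ->].
      rewrite /sv hdot_suml big1 // => i _.
      suff -> : hdot q (evalvec F i) y = 0 by rewrite mulr0.
      rewrite /hdot.
      transitivity (\sum_(j < #|F|) ('X^i * f).[evalpt j]).
        apply: eq_bigr => j _; rewrite !mxE -exprM -NQ expf_card hornerM hornerXn.
        by [].
      rewrite (sum_evalpt (fun a => ('X^i * f).[a])) (sum_horner_small hN) //.
      apply: leq_trans (size_mul_leq _ _) _; rewrite size_polyXn sf.
      have := ltn_ord i; lia.
    rewrite wty eqxx andbT; apply/eqP => y0; move: wty; rewrite y0 /wt.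
    have -> : [set j | (0 : 'rV[F]_#|F|) 0 j != 0] = set0.
      by apply/setP => j; rewrite !inE mxE eqxx.
    by rewrite cards0.
  + move=> y yC y0; rewrite leqNgt; apply/negP => hw.
    have [j0 hj0] : exists j0, y 0 j0 != 0.
      case: (pickP (fun j => y 0 j != 0)) => [j0 h|h]; first by exists j0.
      by case/eqP: y0; apply/rowP => j; rewrite mxE; apply/eqP; move: (h j) => /negbFE.
    pose S := [set j | y 0 j != 0].
    pose f := \prod_(a <- map (@evalpt F) (enum (S :\ j0))) ('X - a%:P).
    have sf : (size f <= t.+1)%N.
      rewrite size_prod_XsubC size_map -cardE.
      have := cardsD1 j0 S; rewrite inE hj0 /=.
      move: hw; rewrite /wt -/S => h1 h2; rewrite h2 in h1; lia.
    have := memCE _ yC _ (inE_sum (fun i => f`_i)).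
    rewrite /sv -(ev_coef sf) /hdot (bigD1 j0) //= big1 ?addr0.
      move/eqP; rewrite mxE mulf_eq0 expf_eq0 q0 /= (negbTE hj0) orbF.
      by rewrite -rootE root_prod_XsubC (mem_map (@evalpt_inj F)) mem_enum setD11.
    move=> j hj; rewrite mxE.
    case: (eqVneq (y 0 j) 0) => [->|yj]; first by rewrite expr0n (gtn_eqF q0) mulr0.
    rewrite (_ : f.[evalpt j] = 0) ?mul0r //; apply/eqP.
    by rewrite -rootE root_prod_XsubC (mem_map (@evalpt_inj F)) mem_enum !inE hj yj.
- rewrite cZ kE HF Ht; case: ifP => h; rewrite !expr2; nia.
- exact: cZ.
Qed.
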